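(* Let $W$ be a $\mathbb Z/2$-graded vector space, $\nu\in\mathbb Z/2$, and $\{-,-\}:W\otimes W\to W$ a bilinear operation of degree $\nu$ satisfying $\{u,v\}=-(-1)^{(|u|+\nu)(|v|+\nu)}\{v,u\}$. Suppose there is a trilinear operation $\alpha(u|v,w)$ of degree $0$ satisfying $\alpha(u|v,w)=(-1)^{(|v|+\nu)(|w|+\nu)}\alpha(u|w,v)$, such that for all homogeneous $u,v,w$, $$\{\{u,v\},w\}=\alpha(u|v,w)-(-1)^{(|u|+\nu)(|v|+\nu)}\alpha(v|u,w).$$ Then $\{-,-\}$ is a graded Lie bracket, i.e. $\{u,\{v,w\}\}-(-1)^{(|u|+\nu)(|v|+\nu)}\{v,\{u,w\}\}=\{\{u,v\},w\}$ for all homogeneous $u,v,w$.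
   Context: $|u|\in\mathbb Z/2$ denotes the parity of a homogeneous element; an operation of degree $\nu$ shifts parity by $\nu$. *)

(* Defs.v *)
From mathcomp Require Import all_boot all_algebra.
Set Implicit Arguments. Unset Strict Implicit. Unset Printing Implicit Defensive.
Import GRing.Theory.
Local Open Scope ring_scope.

(* A Z/2-grading of the K-vector space W: Wp false = W_0, Wp true = W_1,
   two subspaces with W = W_0 (+) W_1 (direct sum).  Parities live in bool
   (= Z/2), with addition xorb (+). *)
Definition Z2graded (K : fieldType) (W : lmodType K) (Wp : bool -> {pred W}) : Prop :=
  [/\ forall i, 0 \in Wp i,
      forall i (a : K) (u v : W), u \in Wp i -> v \in Wp i -> a *: u + v \in Wp i,
      forall w : W, exists w0 w1, [/\ w0 \in Wp false, w1 \in Wp true & w = w0 + w1]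
    & forall w : W, w \in Wp false -> w \in Wp true -> w = 0].

Definition sgn (K : fieldType) (a b : bool) : K := (-1) ^+ (a && b).

Definition bilinear_op (K : fieldType) (W : lmodType K) (f : W -> W -> W) : Prop :=
  (forall u (a : K) v v', f u (a *: v + v') = a *: f u v + f u v') /\
  (forall v (a : K) u u', f (a *: u + u') v = a *: f u v + f u' v).

Definition trilinear_op (K : fieldType) (W : lmodType K) (f : W -> W -> W -> W) : Prop :=
  (forall v w (a : K) u u', f (a *: u + u') v w = a *: f u v w + f u' v w) /\
  (forall u w (a : K) v v', f u (a *: v + v') w = a *: f u v w + f u v' w) /\
  (forall u v (a : K) w w', f u v (a *: w + w') = a *: f u v w + f u v w').

(* Main.v *)
Require Import Defs.
From mathcomp Require Import all_boot all_algebra.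
Import GRing.Theory.
Local Open Scope ring_scope.

Theorem mainTheorem8 (K : fieldType) (W : lmodType K) (Wp : bool -> {pred W})
  (nu : bool) (br : W -> W -> W) (alpha : W -> W -> W -> W) :
  Z2graded Wp ->
  bilinear_op br ->
  (forall (a b : bool) (u v : W), u \in Wp a -> v \in Wp b ->
     br u v \in Wp (a (+) b (+) nu)) ->
  (forall (a b : bool) (u v : W), u \in Wp a -> v \in Wp b ->
     br u v = - (sgn K (a (+) nu) (b (+) nu) *: br v u)) ->
  trilinear_op alpha ->
  (forall (a b c : bool) (u v w : W), u \in Wp a -> v \in Wp b -> w \in Wp c ->
     alpha u v w \in Wp (a (+) b (+) c)) ->
  (forall (a b c : bool) (u v w : W), u \in Wp a -> v \in Wp b -> w \in Wp c ->
     alpha u v w = sgn K (b (+) nu) (c (+) nu) *: alpha u w v) ->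
  (forall (a b c : bool) (u v w : W), u \in Wp a -> v \in Wp b -> w \in Wp c ->
     br (br u v) w = alpha u v w - sgn K (a (+) nu) (b (+) nu) *: alpha v u w) ->
  forall (a b c : bool) (u v w : W), u \in Wp a -> v \in Wp b -> w \in Wp c ->
    br u (br v w) - sgn K (a (+) nu) (b (+) nu) *: br v (br u w) = br (br u v) w.
Proof.
move=> _ _ Hdeg Hanti _ _ Hsym Hjac a b c u v w Hu Hv Hw.
have Hvw := Hdeg _ _ _ _ Hv Hw.
have Huw := Hdeg _ _ _ _ Hu Hw.
rewrite (Hanti _ _ _ _ Hu Hvw) (Hanti _ _ _ _ Hv Huw).
rewrite (Hjac _ _ _ _ _ _ Hv Hw Hu) (Hjac _ _ _ _ _ _ Hu Hw Hv) (Hjac _ _ _ _ _ _ Hu Hv Hw).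
rewrite (Hsym _ _ _ _ _ _ Hv Hw Hu) (Hsym _ _ _ _ _ _ Hw Hv Hu) (Hsym _ _ _ _ _ _ Hu Hw Hv).
set X := alpha v u w; set Y := alpha u v w; set Z := alpha w u v.
clear Hu Hv Hw Hvw Huw Hdeg Hanti Hsym Hjac.
case: a; case: b; case: c; case: nu; rewrite /sgn /= ?expr0 ?expr1 ?scale1r ?scaleN1r ?opprK ?opprB ?opprD ?opprK.
all: try by [].
all: clearbody X Y Z; rewrite (addrC Y) ?(addrC _ Z) ?(addrC Z) ?addrA ?addrK ?addrNK ?subrK ?(addrC (-X)) ?(addrC X) //.
all: rewrite -?addrA ?addKr ?addNKr //.
all: by rewrite addrCA (addrC Y) addKr addrC.
Qed.
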